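(* Let $G$ be an abelian Hausdorff topological group and $A\subseteq G$ with $0\notin A$. The following conditions are equivalent: (i) the Kalton map $K_A:S_A\to\overline{G}$ is continuous and its continuous extension $\overline{K_A}:P_A\to\overline{G}$ is a topologically isomorphic embedding satisfying $\overline{K_A}(P_A)\subseteq G$; (ii) the set $A$ is both absolutely summable and topologically independent in $G$.
   Context: All groups are abelian; topological groups are Hausdorff; $\overline{H}$ denotes the (Raikov) completion of a topological group $H$. For $a\in G$, $\langle a\rangle$ is the cyclic subgroup generated by $a$ with the subspace topology. $P_A=\prod_{a\in A}\langle a\rangle$ has the Tychonoff product topology and $S_A=\bigoplus_{a\in A}\langle a\rangle\subseteq P_A$ the subspace topology. The Kalton map $K_A:S_A\to G$ is the unique homomorphism extending each inclusion $\langle a\rangle\to G$. When $K_A$ is continuous it extends uniquely to a continuous homomorphism $\overline{S_A}\to\overline G$; since $\overline{S_A}=\prod_{a\in A}\overline{\langle a\rangle}\supseteq P_A$, its restriction to $P_A$ is denoted $\overline{K_A}:P_A\to\overline G$. $A$ is absolutely summable if for every family $\{z_a:a\in A\}$ of integers there is $g\in G$ such that for every neighbourhood $U$ of $0$ there is a finite $F\subseteq A$ with $g-\sum_{a\in E}z_aa\in U$ for every finite $E\subseteq A$ containing $F$. $A$ is topologically independent if $0\notin A$ and for every neighbourhood $W$ of $0$ there is a neighbourhood $U$ of $0$ such that for every finite $F\subseteq A$ and all integers $\{z_a:a\in F\}$, $\sum_{a\in F}z_aa\in U$ implies $z_aa\in W$ for all $a\in F$. *)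

(* Defs.v *)
From HB Require Import structures.
From mathcomp Require Import all_boot all_order all_algebra.
From mathcomp Require Import all_classical all_reals all_analysis.
Set Implicit Arguments. Unset Strict Implicit. Unset Printing Implicit Defensive.
Import Order.TTheory GRing.Theory Num.Theory.
Local Open Scope classical_set_scope.
Local Open Scope ring_scope.

Section Kalton.
Variable G : topologicalZmodType.

Definition cyc (a : G) : set G := [set x | exists k : int, x = a *~ k].

(* P_A = prod_{a in A} <a>, realised as the set of functions f : G -> G with
   f a in <a> for a in A and f x = 0 for x not in A, inside the product
   (pointwise) topology {ptws G -> G}.  Its subspace topology is the
   Tychonoff product of the subspace topologies of the <a>. *)
Definition PA (A : set G) : set {ptws G -> G} :=
  [set f | (forall a, A a -> cyc a (f a)) /\ (forall x, ~ A x -> f x = 0)].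

Definition supp (f : {ptws G -> G}) : set G := [set x | f x != 0].

Definition SA (A : set G) : set {ptws G -> G} :=
  [set f | PA A f /\ finite_set (supp f)].

Definition kalton (f : {ptws G -> G}) : G := \sum_(x \in supp f) f x.

Definition hom_on (A : set G) (h : {ptws G -> G} -> G) :=
  forall f g, PA A f -> PA A g ->
    h ((fun x => f x + g x) : {ptws G -> G}) = h f + h g.

Definition top_embedding (X Y : topologicalType) (D : set X) (h : X -> Y) :=
  [/\ {within D, continuous h}, {in D &, injective h} &
      forall x, D x -> forall U, within D (nbhs x) U ->
        exists V, nbhs (h x) V /\ (forall y, D y -> V (h y) -> U y)].

Definition kalton_condition (A : set G) :=
  {within SA A, continuous kalton} /\
  exists Phi : {ptws G -> G} -> G,
    [/\ forall f, SA A f -> Phi f = kalton f,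
        hom_on A Phi &
        top_embedding (PA A) Phi].

Definition absolutely_summable (A : set G) :=
  forall z : G -> int, exists g : G, forall U, nbhs (0 : G) U ->
    exists F : set G, [/\ finite_set F, F `<=` A &
      forall E : set G, finite_set E -> F `<=` E -> E `<=` A ->
        U (g - \sum_(a \in E) a *~ z a)].

Definition topologically_independent (A : set G) :=
  ~ A 0 /\
  forall W, nbhs (0 : G) W -> exists U, nbhs (0 : G) U /\
    forall (F : set G) (z : G -> int), finite_set F -> F `<=` A ->
      U (\sum_(a \in F) a *~ z a) -> forall a, F a -> W (a *~ z a).

End Kalton.

(* Main.v *)
Require Import Defs.
From HB Require Import structures.
From mathcomp Require Import all_boot all_order all_algebra.
From mathcomp Require Import all_classical all_reals all_analysis.
Import Order.TTheory GRing.Theory Num.Theory.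
Local Open Scope classical_set_scope.
Local Open Scope ring_scope.
Section Basics.
Variable G : topologicalZmodType.

Lemma nbhs0_add (U : set G) : nbhs 0 U ->
  exists2 V : set G, nbhs 0 V & forall x y, V x -> V y -> U (x + y).
Proof.
move=> U0.
have : nbhs ((0:G), (0:G)) [set p : G * G | U (p.1 + p.2)].
  by apply: (add_continuous (0,0)); rewrite /= addr0.
case=> [[V1 V2] /= [V1n V2n] H].
exists (V1 `&` V2); first exact: filterI.
by move=> x y [? _] [_ ?]; apply: (H (x,y)).
Qed.

Lemma nbhs0_sub (U : set G) : nbhs 0 U ->
  exists2 V : set G, nbhs 0 V & forall x y, V x -> V y -> U (x - y).
Proof.
move=> U0.
have : nbhs ((0:G), (0:G)) [set p : G * G | U (p.1 - p.2)].
  by apply: (@sub_continuous G (0,0)); rewrite /= subr0.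
case=> [[V1 V2] /= [V1n V2n] H].
exists (V1 `&` V2); first exact: filterI.
by move=> x y [? _] [_ ?]; apply: (H (x,y)).
Qed.

Lemma nbhs_shift (c : G) (N : set G) : nbhs c N -> nbhs (0:G) [set w | N (w + c)].
Proof.
move=> Nc.
have h : (fun w : G => w + c) @ (nbhs (0:G)) --> (0 + c).
  apply: (@continuous_comp _ _ _ (fun w : G => (w, c)) (fun p : G * G => p.1 + p.2)).
    by apply: cvg_pair; [exact: cvg_id|exact: cvg_cst].
  exact: add_continuous.
by apply: h; rewrite add0r.
Qed.

Lemma nbhs_unshift (c : G) (U : set G) : nbhs (0:G) U -> nbhs c [set y | U (y - c)].
Proof.
move=> U0.
have h : (fun y : G => y - c) @ (nbhs c) --> (c - c).
  apply: (@continuous_comp _ _ _ (fun y : G => (y, c)) (fun p : G * G => p.1 - p.2)).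
    by apply: cvg_pair; [exact: cvg_id|exact: cvg_cst].
  exact: sub_continuous.
by apply: h; rewrite subrr.
Qed.

Lemma nbhs0_opp (U : set G) : nbhs (0:G) U -> nbhs (0:G) [set w | U (- w)].
Proof.
move=> U0; have h := @opp_continuous G 0.
by apply: h; rewrite oppr0.
Qed.

Lemma hausdorff0 (hG : hausdorff_space G) (d : G) :
  (forall U, nbhs 0 U -> U d) -> d = 0.
Proof.
move=> H; apply: hG => P Q Pd Q0; exists d; split.
  exact: nbhs_singleton.
exact: H.
Qed.

End Basics.
Arguments nbhs0_add {G U}. Arguments nbhs0_sub {G U}. Arguments nbhs_shift {G c N}.
Arguments nbhs_unshift {G c U}. Arguments nbhs0_opp {G U}. Arguments hausdorff0 {G}.
Section Basics2.
Variable G : topologicalZmodType.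

Lemma nbhs_sum_seq (s : seq G) (U : set G) : nbhs 0 U ->
  exists2 W : set G, nbhs 0 W &
    forall x : G -> G, (forall c, c \in s -> W (x c)) -> U (\sum_(c <- s) x c).
Proof.
elim: s U => [|c s IH] U U0.
  by exists U => // x _; rewrite big_nil; exact: nbhs_singleton.
have [V V0 HV] := nbhs0_add U0.
have [W1 W10 HW1] := IH V V0.
exists (V `&` W1); first exact: filterI.
move=> x Hx; rewrite big_cons; apply: HV.
  by have [] := Hx c (mem_head _ _).
apply: HW1 => d ds; have ds' : d \in c :: s by rewrite in_cons ds orbT.
by have [] := Hx d ds'.
Qed.

Lemma nbhs_sum_fin (C : set G) (U : set G) : finite_set C -> nbhs 0 U ->
  exists2 W : set G, nbhs 0 W &
    forall x : G -> G, (forall c, C c -> W (x c)) -> U (\sum_(c \in C) x c).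
Proof.
move=> fC U0; have [W W0 HW] := @nbhs_sum_seq (finmap.enum_fset (fset_set C)) U U0.
exists W => // x Hx; rewrite fsbig_finite //; apply: HW => c cs; apply: Hx.
by move: cs; rewrite in_fset_set // inE.
Qed.

Lemma nbhs_bigI (C : set G) (W : G -> set G) (p : G) : finite_set C ->
  (forall c, C c -> nbhs p (W c)) -> nbhs p [set w | forall c, C c -> W c w].
Proof.
move=> fC H.
have HB := @filter_bigI G G (fset_set C) W (nbhs p) (nbhs_filter p).
apply: filterS (HB _) => [w Hw c Cc|c]; last by rewrite in_fset_set // inE => /H.
by apply: (Hw c); rewrite /= in_fset_set ?inE.
Qed.

End Basics2.
Arguments nbhs_sum_fin {G C U}. Arguments nbhs_bigI {G C W p}.
Section Box.
Variable G : topologicalZmodType.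
Local Notation T := {ptws G -> G}.

Definition box (f : T) (N : set T) :=
  exists (C : set G) (O : G -> set G), [/\ finite_set C,
    (forall c, C c -> nbhs (f c) (O c)) &
    (forall h : T, (forall c, C c -> O c (h c)) -> N h)].

Lemma box_filter f : Filter (box f).
Proof.
constructor.
- by exists set0, (fun=> setT); split.
- move=> P Q [C1 [Op1 [F1 H1 K1]]] [C2 [Op2 [F2 H2 K2]]].
  exists (C1 `|` C2), (fun c => [set x | (C1 c -> Op1 c x) /\ (C2 c -> Op2 c x)]).
  split.
  + by rewrite finite_setU.
  + move=> c _; apply: (@filterS _ _ _ ([set x | C1 c -> Op1 c x] `&` [set x | C2 c -> Op2 c x])).
      by move=> x [].
    apply: filterI.
      have [c1|nc1] := pselect (C1 c); first by apply: filterS (H1 _ c1) => x ? _.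
      by apply: (@filterS _ _ _ setT); [move=> x _ /nc1| exact: filterT].
    have [c1|nc1] := pselect (C2 c); first by apply: filterS (H2 _ c1) => x ? _.
    by apply: (@filterS _ _ _ setT); [move=> x _ /nc1| exact: filterT].
  + move=> h Hh; split.
      by apply: K1 => c cs; have [+ _] := Hh c (or_introl cs); apply.
    by apply: K2 => c cs; have [_ +] := Hh c (or_intror cs); apply.
- move=> P Q PQ [C [Op [F H1 H2]]]; exists C, Op; split => // h /H2; exact: PQ.
Qed.

Lemma nbhs_box (f : T) N : nbhs f N -> box f N.
Proof.
have := @cvg_sup (G -> G) G (fun i => Topological.class (initial_topology (fun g : G -> G => g i))) (box f) f (box_filter f).
case=> _ /(_ _) H; apply: H => i.
apply/cvg_image; first exact: box_filter.
  by apply/seteqP; split => // y _; exists (fun=> y).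
move=> O Of; exists ((fun g : G -> G => g i) @^-1` O).
  exists [set i], (fun=> O); split => [|c ->//|h]; first exact: finite_set1.
  by apply.
by apply/seteqP; split => [y [g Og <-]//|y Oy]; exists (fun=> y).
Qed.

Lemma box_nbhs (f : T) N : box f N -> nbhs f N.
Proof.
move=> [C [Op [FC H1 H2]]].
have HB := @filter_bigI T G (fset_set C) (fun c => (fun g : T => g c) @^-1` Op c) (nbhs f) (nbhs_filter f).
apply: filterS (HB _) => [h Hh|c]; last first.
  rewrite in_fset_set // inE => /H1 Oc.
  exact: (@proj_continuous G (fun _ => G) c f).
apply: H2 => c Cc; apply: (Hh c).
by rewrite /= in_fset_set ?inE.
Qed.

End Box.
Arguments nbhs_box {G f N}. Arguments box_nbhs {G f N}.
Section Main.
Variables (G : topologicalZmodType) (A : set G).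
Hypothesis hG : hausdorff_space G.
Local Notation T := {ptws G -> G}.

Definition sumto (f : G -> G) (g : G) := forall U, nbhs (0:G) U ->
  exists F : set G, [/\ finite_set F, F `<=` A &
    forall E, finite_set E -> F `<=` E -> E `<=` A -> U (g - \sum_(a \in E) f a)].

Lemma sumto_unique {f g1 g2} : sumto f g1 -> sumto f g2 -> g1 = g2.
Proof.
move=> s1 s2; apply/eqP; rewrite -subr_eq0; apply/eqP. apply: (hausdorff0 hG) => U U0.
have [V V0 HV] := nbhs0_sub U0.
have [F1 [f1 s1A H1]] := s1 V V0; have [F2 [f2 s2A H2]] := s2 V V0.
have fE : finite_set (F1 `|` F2) by rewrite finite_setU.
have E1 : F1 `|` F2 `<=` A by move=> x [/s1A|/s2A].
have := HV _ _ (H1 _ fE (@subsetUl _ _ _) E1) (H2 _ fE (@subsetUr _ _ _) E1).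
by rewrite opprB addrA subrK.
Qed.

Definition restr (E : set G) (f : G -> G) : T :=
  fun x => if pselect (E x) then f x else 0.

Lemma restrE E f x : E x -> restr E f x = f x.
Proof. by rewrite /restr; case: (pselect (E x)). Qed.

Lemma restrNE E f x : ~ E x -> restr E f x = 0.
Proof. by rewrite /restr; case: (pselect (E x)). Qed.

Lemma cyc0 (a : G) : cyc a 0.
Proof. by exists 0; rewrite mulr0z. Qed.

Lemma cycD (a x y : G) : cyc a x -> cyc a y -> cyc a (x + y).
Proof. by move=> [k ->] [l ->]; exists (k + l); rewrite mulrzDr. Qed.

Lemma cycN (a x : G) : cyc a x -> cyc a (- x).
Proof. by move=> [k ->]; exists (- k); rewrite mulrNz. Qed.

Lemma PA0 : PA A (fun _ => 0).
Proof. by split => [a _|//]; exact: cyc0. Qed.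

Lemma PA_add {f g : T} : PA A f -> PA A g -> PA A (fun x => f x + g x).
Proof.
move=> [f1 f2] [g1 g2]; split => [a Aa|x nAx]; first exact: cycD (f1 _ Aa) (g1 _ Aa).
by rewrite f2 // g2 // addr0.
Qed.

Lemma PA_opp {f : T} : PA A f -> PA A (fun x => - f x).
Proof.
move=> [f1 f2]; split => [a Aa|x nAx]; first exact: cycN (f1 _ Aa).
by rewrite f2 // oppr0.
Qed.

Lemma PA_sub {f g : T} : PA A f -> PA A g -> PA A (fun x => f x - g x).
Proof. by move=> Pf Pg; exact: (PA_add Pf (PA_opp Pg)). Qed.

Lemma PA_restr {E} {f : T} : PA A f -> PA A (restr E f).
Proof.
move=> [f1 f2]; split => [a Aa|x nAx].
  by rewrite /restr; case: (pselect (E a)) => ?; [exact: f1|exact: cyc0].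
by rewrite /restr; case: (pselect (E x)) => ?; [exact: f2|].
Qed.

Lemma supp_restr E (f : T) : supp (restr E f) `<=` E.
Proof.
move=> x; rewrite /supp /= /restr; case: (pselect (E x)) => // ?.
by rewrite eqxx.
Qed.

Lemma SA_restr {E} {f : T} : PA A f -> finite_set E -> SA A (restr E f).
Proof.
move=> Pf fE; split; first exact: PA_restr.
exact: sub_finite_set (@supp_restr E f) fE.
Qed.

Lemma kalton_supp {f : T} {E} : supp f `<=` E ->
  kalton f = \sum_(x \in E) f x.
Proof.
move=> sE; rewrite /kalton; apply: fsbig_widen => // x [_].
by rewrite /supp /= => /negP; rewrite negbK => /eqP.
Qed.

Lemma kalton_restr E (f : T) : kalton (restr E f) = \sum_(x \in E) f x.
Proof.
rewrite (kalton_supp (@supp_restr E f)); apply: eq_fsbigr => x.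
by rewrite in_setE => Ex; rewrite restrE.
Qed.

Lemma supp_PA {f : T} : PA A f -> supp f `<=` A.
Proof.
move=> [_ f2] x; rewrite /supp /= => fx.
have [//|nAx] := pselect (A x).
by rewrite f2 // eqxx in fx.
Qed.

Lemma sumto_SA {f : T} : SA A f -> sumto f (kalton f).
Proof.
move=> [Pf fs] U U0; exists (supp f); split => //; first exact: supp_PA.
move=> E fE sE EA; rewrite (kalton_supp sE) subrr.
exact: nbhs_singleton.
Qed.

Definition Phi (f : T) : G := xget 0 (sumto f).

Definition zcoef (f : T) (a : G) : int := xget 0 [set k | f a = a *~ k].

Lemma zcoefE {f : T} {a} : PA A f -> A a -> f a = a *~ zcoef f a.
Proof.
move=> [f1 _] Aa; rewrite /zcoef.
by have := xgetPex 0 (f1 a Aa).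
Qed.

Lemma sum_zcoef {f : T} {E} : PA A f -> E `<=` A ->
  \sum_(a \in E) a *~ zcoef f a = \sum_(a \in E) f a.
Proof.
move=> Pf EA; apply: eq_fsbigr => a; rewrite in_setE => Ea.
by rewrite -zcoefE //; apply: EA.
Qed.

Section AS.
Hypothesis AS : absolutely_summable A.

Lemma PA_sumto {f : T} : PA A f -> sumto f (Phi f).
Proof.
move=> Pf; apply: xgetPex.
have [g Hg] := AS (zcoef f); exists g => U U0.
have [F [fF FA HF]] := Hg U U0; exists F; split => // E fE FE EA.
by rewrite -sum_zcoef //; apply: HF.
Qed.

Lemma Phi_SA {f : T} : SA A f -> Phi f = kalton f.
Proof.
move=> Sf; apply: sumto_unique (sumto_SA Sf).
by apply: PA_sumto; case: Sf.
Qed.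

Lemma sumto_add {f g : T} {s t} : sumto f s -> sumto g t ->
  sumto (fun x => f x + g x) (s + t).
Proof.
move=> s1 s2 U U0.
have [V V0 HV] := nbhs0_add U0.
have [F1 [f1 s1A H1]] := s1 V V0; have [F2 [f2 s2A H2]] := s2 V V0.
exists (F1 `|` F2); split; first by rewrite finite_setU.
  by move=> x [/s1A|/s2A].
move=> E fE FE EA; rewrite fsbig_split //.
have := HV _ _ (H1 E fE (subset_trans (@subsetUl _ _ _) FE) EA)
               (H2 E fE (subset_trans (@subsetUr _ _ _) FE) EA).
by rewrite opprD addrACA.
Qed.

Lemma Phi_add {f g : T} : PA A f -> PA A g ->
  Phi (fun x => f x + g x) = Phi f + Phi g.
Proof.
move=> Pf Pg; apply: sumto_unique (PA_sumto (PA_add Pf Pg)) _.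
exact: sumto_add (PA_sumto Pf) (PA_sumto Pg).
Qed.

Lemma Phi0 : Phi (fun _ => 0) = 0.
Proof.
have := Phi_add PA0 PA0.
have -> : (fun _ : G => (0:G) + 0) = (fun _ => 0) by apply: funext => x; rewrite addr0.
by move=> /eqP; rewrite -subr_eq0 opprD addrA subrr add0r oppr_eq0 => /eqP.
Qed.

Lemma Phi_sub {f g : T} : PA A f -> PA A g ->
  Phi (fun x => f x - g x) = Phi f - Phi g.
Proof.
move=> Pf Pg.
have := Phi_add (PA_sub Pf Pg) Pg.
have -> : (fun x => f x - g x + g x) = f by apply: funext => x; rewrite subrK.
by move=> ->; rewrite addrK.
Qed.

Lemma TI_Phi (TI : topologically_independent A) {W} : nbhs (0:G) W ->
  exists2 U : set G, nbhs 0 U &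
    forall k : T, PA A k -> U (Phi k) -> forall a, A a -> W (k a).
Proof.
move=> W0; case: TI => _ /(_ W W0) [U1 [U1n HU1]].
have [U2 U2n HU2] := nbhs0_add U1n.
exists U2 => // k Pk Uk a Aa.
have [F [fF FA HF]] := PA_sumto Pk _ (nbhs0_opp U2n).
have fE : finite_set (F `|` [set a]).
  by rewrite finite_setU; split => //; exact: finite_set1.
have EA : F `|` [set a] `<=` A by move=> x [/FA|->].
have /= H := HF _ fE (@subsetUl _ _ _) EA.
have Hs : U1 (\sum_(b \in F `|` [set a]) b *~ zcoef k b).
  rewrite sum_zcoef //.
  by have := HU2 _ _ Uk H; rewrite opprB addrC subrK.
by rewrite (zcoefE Pk Aa); apply: (HU1 _ _ fE EA Hs); right.
Qed.

Lemma hump {U} : nbhs (0:G) U -> exists C : set G, [/\ finite_set C, C `<=` A &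
  forall (z : G -> int) E, finite_set E -> E `<=` A -> (forall x, E x -> ~ C x) ->
    U (\sum_(a \in E) a *~ z a)].
Proof.
move=> U0; have [V V0 HV] := nbhs0_sub U0.
apply: contrapT => Hn.
pose P (C : set G) (p : (G -> int) * set G) := [/\ finite_set p.2, p.2 `<=` A,
  (forall x, p.2 x -> ~ C x) & ~ U (\sum_(a \in p.2) a *~ p.1 a)].
have step : forall C, finite_set C -> C `<=` A -> exists p, P C p.
  move=> C fC CA; apply: contrapT => Hp; apply: Hn; exists C; split => // z E fE EA dE.
  by apply: contrapT => nU; apply: Hp; exists (z, E).
pose nxt (C : set G) : (G -> int) * set G :=
  match pselect (finite_set C /\ C `<=` A) with
  | left h => projT1 (cid (step C h.1 h.2))
  | right _ => (fun=> 0, set0) end.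
have nxtP C : finite_set C -> C `<=` A -> P C (nxt C).
  move=> fC CA; rewrite /nxt; case: (pselect (finite_set C /\ C `<=` A)) => [h|[]//].
  exact: projT2 (cid _).
pose D := fix D n := if n is m.+1 then D m `|` (nxt (D m)).2 else set0.
have DP n : finite_set (D n) /\ D n `<=` A.
  elim: n => [|n [fD DA]] /=; first by split => //; exact: finite_set0.
  have [f2 s2 _ _] := nxtP _ fD DA; split; first by rewrite finite_setU.
  by move=> x [/DA|/s2].
pose E n := (nxt (D n)).2.
pose z n := (nxt (D n)).1.
have Dmono m n : (m <= n)%N -> D m `<=` D n.
  move=> mn; rewrite -(subnK mn); elim: (n - m)%N => [//|k IH] x /IH Dx.
  by rewrite addSn; left.
have Edis m n x : (m < n)%N -> E m x -> E n x -> False.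
  move=> mn Em En; have [_ _ dis _] := nxtP _ (DP n).1 (DP n).2.
  by apply: (dis x En); apply: (Dmono m.+1 n mn); right.
have Euniq m n x : E m x -> E n x -> m = n.
  move=> Em En; case: (ltngtP m n) => // mn; exfalso.
    exact: Edis mn Em En.
  exact: Edis mn En Em.
pose N x := xget 0%N [set n | E n x].
have NE n x : E n x -> N x = n.
  move=> Enx; apply: (Euniq _ _ x (xgetPex 0%N (ex_intro (fun m => E m x) n Enx)) Enx).
pose zz x := z (N x) x.
have [g Hg] := AS zz.
have [F [fF FA HF]] := Hg V V0.
pose n := (\max_(x <- finmap.enum_fset (fset_set F)) N x).+1.
have dis x : F x -> E n x -> False.
  move=> Fx Enx.
  have : (N x <= \max_(y <- finmap.enum_fset (fset_set F)) N y)%N.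
    by apply: leq_bigmax_seq => //; rewrite in_fset_set // inE.
  by rewrite (NE _ _ Enx) /n ltnn.
have [fEn EnA EnD nU] := nxtP _ (DP n).1 (DP n).2.
apply: nU.
have fE1 : finite_set (F `|` E n) by rewrite finite_setU.
have E1A : F `|` E n `<=` A by move=> x [/FA|/EnA].
have := HV _ _ (HF _ fF (@subset_refl _ F) FA) (HF _ fE1 (@subsetUl _ _ _) E1A).
rewrite fsbigU0 //; last by move=> x [Fx Ex]; exact: dis x Fx Ex.
have e (g' a b : G) : (g' - a) - (g' - (a + b)) = b.
  by rewrite opprB addrC addrA subrK [a + b]addrC addrK.
rewrite e => H; congr (U _): H; apply: eq_fsbigr => x; rewrite in_setE => Ex.
by rewrite /zz (NE _ _ Ex).
Qed.

Lemma tail {U} : nbhs (0:G) U -> exists C : set G, [/\ finite_set C, C `<=` A &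
  forall k : T, PA A k -> (forall c, C c -> k c = 0) -> U (Phi k)].
Proof.
move=> U0; have [V V0 HV] := nbhs0_add U0.
have [C [fC CA HC]] := hump V0.
exists C; split => // k Pk k0.
have [F [fF FA HF]] := PA_sumto Pk V V0.
have fFC : finite_set (F `\` C) by exact: finite_setD.
have FCA : F `\` C `<=` A by move=> x [/FA].
have S1 : \sum_(a \in F) k a = \sum_(a \in F `\` C) k a.
  symmetry; apply: fsbig_widen; first by move=> x [].
  move=> x [Fx nFC]; apply: k0; apply: contrapT => nC; exact: nFC (conj Fx nC).
have H1 := HF F fF (@subset_refl _ F) FA.
have H2 : V (\sum_(a \in F `\` C) k a).
  by rewrite -(sum_zcoef Pk FCA); apply: HC => // x [].
by have := HV _ _ H1 H2; rewrite -S1 subrK.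
Qed.

Lemma Phi_cont : {within PA A, continuous Phi}.
Proof.
apply/subspace_continuousP => f Pf N /= NP.
rewrite /from_subspace in NP *; rewrite nbhs_simpl /= /within.
have U0 := nbhs_shift NP.
have [V V0 HV] := nbhs0_add U0.
have [C [fC CA HC]] := tail V0.
have [W W0 HW] := nbhs_sum_fin fC V0.
apply: box_nbhs; exists C, (fun c => [set y | W (y - f c)]); split => //.
  by move=> c _; exact: nbhs_unshift W0.
move=> h Hh Ph.
pose k : T := fun x => h x - f x.
have Pk : PA A k := PA_sub Ph Pf.
pose k1 := restr C k.
pose k2 : T := fun x => k x - k1 x.
have Pk1 : PA A k1 := PA_restr Pk.
have Pk2 : PA A k2 := PA_sub Pk Pk1.
have ek : k = (fun x => k1 x + k2 x).
  by apply: funext => x; rewrite /k2 addrC subrK.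
have Ek : Phi k = Phi k1 + Phi k2 by rewrite {1}ek Phi_add.
rewrite Phi_sub // in Ek.
have : [set w | N (w + Phi f)] (Phi h - Phi f).
  rewrite Ek; apply: HV.
    rewrite Phi_SA; last exact: SA_restr.
    by rewrite kalton_restr; apply: HW => c Cc; exact: Hh.
  apply: HC => // c Cc; by rewrite /k2 /k1 restrE // subrr.
by rewrite /= subrK.
Qed.

Section TI.
Hypothesis TI : topologically_independent A.

Lemma Phi_open (f : T) : PA A f -> forall N, within (PA A) (nbhs f) N ->
  exists V, nbhs (Phi f) V /\ (forall y, PA A y -> V (Phi y) -> N y).
Proof.
move=> Pf N /nbhs_box [C [Op [fC HO HN]]].
pose W := [set w | forall c, C c -> Op c (w + f c)].
have W0 : nbhs (0:G) W.
  by apply: nbhs_bigI => // c Cc; apply: nbhs_shift; exact: HO.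
have [U U0 HU] := TI_Phi TI W0.
exists [set y | U (y - Phi f)]; split; first exact: nbhs_unshift U0.
move=> h Ph Uh; apply: HN => // c Cc.
have [Ac|nAc] := pselect (A c).
  have := HU (fun x => h x - f x) (PA_sub Ph Pf) _ c Ac.
  by rewrite Phi_sub // => /(_ Uh c Cc); rewrite subrK.
rewrite Ph.2 // -(Pf.2 c nAc); exact: nbhs_singleton (HO c Cc).
Qed.

Lemma Phi_inj : {in PA A &, injective Phi}.
Proof.
move=> f g; rewrite !in_setE => Pf Pg Hfg; apply: funext => x.
have [Ax|nAx] := pselect (A x); last by rewrite Pf.2 ?Pg.2.
apply/eqP; rewrite -subr_eq0; apply/eqP; apply: (hausdorff0 hG) => W W0.
have [U U0 HU] := TI_Phi TI W0.
apply: (HU (fun x => f x - g x) (PA_sub Pf Pg)) => //.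
by rewrite Phi_sub // Hfg subrr; exact: nbhs_singleton.
Qed.

End TI.

Lemma kalton_cont : {within SA A, continuous (@kalton G)}.
Proof.
apply/subspace_continuousP => f Sf N /= NP.
rewrite /from_subspace in NP *; rewrite nbhs_simpl /= /within.
rewrite -(Phi_SA Sf) in NP.
have PC := (@subspace_continuousP _ (PA A) _ Phi).1 Phi_cont.
have := PC f Sf.1 N NP.
rewrite nbhs_simpl /= /within => H0.
have sub : [set y : T | PA A y -> N (Phi y)] `<=` [set y | SA A y -> N (kalton y)].
  by move=> h H Sh; rewrite -(Phi_SA Sh); exact: H Sh.1.
exact: (filterS sub H0).
Qed.

End AS.

Lemma ii_i : absolutely_summable A -> topologically_independent A ->
  kalton_condition A.
Proof.
move=> AS TI; split; first exact: kalton_cont.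
exists Phi; split.
- by move=> f Sf; exact: Phi_SA.
- by move=> f g Pf Pg; exact: Phi_add.
- split; [exact: Phi_cont|exact: Phi_inj|exact: Phi_open].
Qed.

Lemma PA_zf (z : G -> int) : PA A (restr A (fun x => x *~ z x)).
Proof.
split => [a Aa|x nAx]; last by rewrite restrNE.
by rewrite restrE //; exists (z a).
Qed.

Section I.
Variable Psi : T -> G.
Hypotheses (Hagree : forall f, SA A f -> Psi f = kalton f)
  (Hhom : hom_on A Psi) (Hemb : top_embedding (PA A) Psi).

Lemma Psi_cont_at {f : T} : PA A f -> forall N, nbhs (Psi f) N ->
  nbhs f [set h | PA A h -> N (Psi h)].
Proof.
move=> Pf N NP; case: Hemb => Hc _ _.
have PC := (@subspace_continuousP _ (PA A) _ Psi).1 Hc.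
have := PC f Pf N NP.
by rewrite nbhs_simpl /= /within.
Qed.

Lemma Psi0 : Psi (fun _ => 0) = 0.
Proof.
have -> : (fun _ : G => 0 : G) = restr set0 (fun _ => 0).
  by apply: funext => x; rewrite restrNE.
by rewrite Hagree ?kalton_restr ?fsbig_set0 //; apply: SA_restr => //; exact: PA0.
Qed.

Lemma AS_of : absolutely_summable A.
Proof.
move=> z; pose f := restr A (fun x => x *~ z x).
have Pf : PA A f := PA_zf z.
exists (Psi f) => U U0.
have NP : nbhs (Psi f) [set y | U (Psi f - y)].
  apply: filterS (nbhs_unshift (nbhs0_opp U0)) => y /=.
  by rewrite opprB.
have := Psi_cont_at Pf _ NP => /nbhs_box [C [Op [fC HO HN]]].
exists (C `&` A); split; [by apply: finite_setI; left|by move=> x []|].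
move=> E fE CE EA.
pose h := restr E f.
have Sh : SA A h := SA_restr Pf fE.
have hf c : C c -> h c = f c.
  move=> Cc; have [Ac|nAc] := pselect (A c).
    by rewrite /h restrE //; apply: CE.
  rewrite /h restrNE; last by move=> /EA.
  by rewrite /f restrNE.
have := HN h _ Sh.1.
rewrite /= [Psi h]Hagree // kalton_restr.
have -> : \sum_(x \in E) f x = \sum_(a \in E) a *~ z a.
  apply: eq_fsbigr => x; rewrite in_setE => Ex.
  by rewrite /f restrE //; apply: EA.
apply => c Cc; rewrite hf //; exact: nbhs_singleton (HO c Cc).
Qed.

Lemma TI_of : ~ A 0 -> topologically_independent A.
Proof.
move=> A0; split => // W W0.
pose z0 : T := fun _ => 0.
have NP : nbhs (Psi (fun _ => 0)) W by rewrite Psi0.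
have := Psi_cont_at PA0 _ NP => /nbhs_box [C [Op [fC HO HN]]].
have Hc : forall c, exists V : set G, C c -> nbhs (0:G) V /\
    (forall y, PA A y -> V (Psi y) -> W (y c)).
  move=> c; have [Cc|nCc] := pselect (C c); last by exists setT.
  have : within (PA A) (nbhs (z0 : T)) [set y : T | W (y c)].
    rewrite /within.
    have := @proj_continuous G (fun _ => G) c (fun _ => 0) W W0.
    move=> H0.
    have sub : ((@proj G (fun _ => G) c) @^-1` W : set T) `<=` [set y : T | PA A y -> W (y c)].
      by move=> y Wy _.
    exact: (filterS sub H0).
  case: Hemb => _ _ Ho; move=> /(Ho _ PA0) [V [V0 HV]].
  by exists V => _; split; [rewrite -Psi0 | exact: HV].
have [Vf HVf] := choice Hc.
exists [set w | forall c, C c -> Vf c w]; split.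
  by apply: nbhs_bigI => // c Cc; have [] := HVf c Cc.
move=> F z fF FA HU a Fa.
pose g := restr A (fun x => x *~ z x).
have Pg : PA A g := PA_zf z.
pose h := restr F g.
have Sh : SA A h := SA_restr Pg fF.
have Psih : Psi h = \sum_(x \in F) x *~ z x.
  rewrite Hagree // kalton_restr; apply: eq_fsbigr => x; rewrite in_setE => Fx.
  by rewrite /g restrE //; apply: FA.
have [Ca|nCa] := pselect (C a).
  have [_ H] := HVf a Ca.
  have := H h Sh.1; rewrite Psih => /(_ (HU a Ca)).
  by rewrite /h restrE // /g restrE //; apply: FA.
pose d := restr [set a] g.
have Sd : SA A d := SA_restr Pg (finite_set1 a).
have Psid : Psi d = a *~ z a.
  by rewrite Hagree // kalton_restr fsbig_set1 /g restrE //; apply: FA.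
rewrite -Psid; apply: HN _ Sd.1 => c Cc.
rewrite /d restrNE; first exact: nbhs_singleton (HO c Cc).
by move=> /= ca; apply: nCa; rewrite -ca.
Qed.

End I.

Lemma i_ii : ~ A 0 -> kalton_condition A ->
  absolutely_summable A /\ topologically_independent A.
Proof.
move=> A0 [_ [Psi [Hagree Hhom Hemb]]]; split.
  exact: (AS_of Psi Hagree Hemb).
exact: (TI_of Psi Hagree Hemb A0).
Qed.

End Main.

Theorem theorem7p2 (G : topologicalZmodType) (A : set G) :
  hausdorff_space G -> ~ A 0 ->
  (kalton_condition A <->
   absolutely_summable A /\ topologically_independent A).
Proof.
move=> hG A0; split; first exact: i_ii.
by move=> [AS TI]; exact: ii_i.
Qed.
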